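(* Let $A=\bigoplus_{j\ge0}A_j$ be a positively graded ring (a positively graded monoid in the category of abelian groups) such that $A_0$ is a semisimple ring. Then $A$ is pre-Koszul.
   Context: $\mathbf{grA\text{-}Mod}$ is the category of graded left $A$-modules with degree-preserving homomorphisms. $A_0$ is regarded as a graded $A$-module concentrated in degree $0$ (via $A\to A/A_{>0}\cong A_0$), and $(M\langle n\rangle)_i=M_{i-n}$. A graded $A$-module $M$ is generated by its degree $i$ component over $A_0$ if the action map $A\otimes_{A_0}M_i\to M$ is surjective. $A$ is pre-Koszul if $A_0$ is injective as a module over itself, each $A_i$ is projective as an $A_0$-module, and for every $i$ and every graded $A$-module $M$ with $M_j=0$ for $j<i$, if $\mathrm{Hom}_{\mathbf{grA\text{-}Mod}}(M,A_0\langle n\rangle)=0$ for all $n\ne i$, then $M$ is generated by its degree $i$ component over $A_0$. *)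

(* Defs.v *)
From HB Require Import structures.
From mathcomp Require Import all_boot all_order all_algebra.
Set Implicit Arguments. Unset Strict Implicit. Unset Printing Implicit Defensive.
Import Order.TTheory GRing.Theory Num.Theory.
Local Open Scope ring_scope.

(* A positively graded ring is presented internally: a ring A together with
   additive subgroups G i (= A_i, i : nat) such that A = (+)_i A_i. *)

Definition addsub (V : zmodType) (P : pred V) : Prop :=
  0 \in P /\ (forall x y, x \in P -> y \in P -> x - y \in P).

Section Graded.
Variables (A : pzRingType) (G : nat -> pred A).

Definition pos_graded_ring : Prop :=
  [/\ forall i, addsub (G i),
      forall i j a b, a \in G i -> b \in G j -> a * b \in G (i + j)%N,
      1 \in G 0%N,
      forall a, exists (n : nat) (x : nat -> A),
          (forall i, x i \in G i) /\ a = \sum_(i < n) x i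
    & forall (n : nat) (x : nat -> A), (forall i, x i \in G i) ->
          \sum_(i < n) x i = 0 -> forall i, (i < n)%N -> x i = 0].

(* ---- A_0-modules (left), presented as a zmodType with an action of A
   that is only required to be a module action for scalars in A_0 ---- *)
Definition A0_module (X : zmodType) (act : A -> X -> X) : Prop :=
  forall r s x y, r \in G 0%N -> s \in G 0%N ->
    [/\ act 1 x = x, act (r * s) x = act r (act s x),
        act (r + s) x = act r x + act s x & act r (x + y) = act r x + act r y].

Definition A0_hom (X Y : zmodType) (actX : A -> X -> X) (actY : A -> Y -> Y)
  (f : X -> Y) : Prop :=
  (forall x y, f (x + y) = f x + f y) /\
  (forall r x, r \in G 0%N -> f (actX r x) = actY r (f x)).

(* A_0-linear maps out of the A_0-submodule P of A (left multiplication);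
   such maps are functions on A whose values outside P are irrelevant *)
Definition A0_hom_from (P : pred A) (Y : zmodType) (actY : A -> Y -> Y)
  (g : A -> Y) : Prop :=
  (forall a b, a \in P -> b \in P -> g (a + b) = g a + g b) /\
  (forall r a, r \in G 0%N -> a \in P -> g (r * a) = actY r (g a)).

Definition A0_hom_to0 (X : zmodType) (actX : A -> X -> X) (g : X -> A) : Prop :=
  [/\ forall x, g x \in G 0%N,
      forall x y, g (x + y) = g x + g y
    & forall r x, r \in G 0%N -> g (actX r x) = r * g x].

Definition A0_self_injective : Prop :=
  forall (X Y : zmodType) (actX : A -> X -> X) (actY : A -> Y -> Y)
         (iota : X -> Y) (g : X -> A),
    A0_module actX -> A0_module actY -> A0_hom actX actY iota ->
    injective iota -> A0_hom_to0 actX g ->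
    exists h : Y -> A, A0_hom_to0 actY h /\ forall x, h (iota x) = g x.

Definition A0_projective (P : pred A) : Prop :=
  forall (X Y : zmodType) (actX : A -> X -> X) (actY : A -> Y -> Y)
         (p : X -> Y) (g : A -> Y),
    A0_module actX -> A0_module actY -> A0_hom actX actY p ->
    (forall y, exists x, p x = y) -> A0_hom_from P actY g ->
    exists h : A -> X, A0_hom_from P actX h /\
                       forall a, a \in P -> p (h a) = g a.

Definition A0_left_ideal (I : pred A) : Prop :=
  [/\ forall a, a \in I -> a \in G 0%N, addsub I
    & forall r a, r \in G 0%N -> a \in I -> r * a \in I].

Definition A0_semisimple : Prop :=
  forall I : pred A, A0_left_ideal I ->
    exists J : pred A, [/\ A0_left_ideal J,
      forall a, a \in I -> a \in J -> a = 0
    & forall a, a \in G 0%N -> exists x y, [/\ x \in I, y \in J & a = x + y]].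

Definition graded_module (M : lmodType A) (MG : int -> pred M) : Prop :=
  [/\ forall j, addsub (MG j),
      forall (i : nat) (j : int) a m, a \in G i -> m \in MG j -> a *: m \in MG (i%:Z + j),
      forall m, exists (s : seq int) (x : int -> M),
          [/\ uniq s, forall k, x k \in MG k & m = \sum_(k <- s) x k]
    & forall (s : seq int) (x : int -> M), uniq s -> (forall k, x k \in MG k) ->
          \sum_(k <- s) x k = 0 -> forall k, k \in s -> x k = 0].

(* a0 is the image of a under A -> A/A_{>0} ~= A_0 *)
Definition deg0_part (a a0 : A) : Prop :=
  a0 \in G 0%N /\ exists (n : nat) (x : nat -> A),
     (forall i, x i \in G i.+1) /\ a - a0 = \sum_(i < n) x i.

(* degree-preserving A-homomorphisms M -> A_0<n>, where A_0<n> is A_0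
   concentrated in degree n, with A acting through A -> A_0 *)
Definition hom_to_A0_shift (M : lmodType A) (MG : int -> pred M) (n : int)
  (f : M -> A) : Prop :=
  [/\ forall m, f m \in G 0%N,
      forall m m', f (m + m') = f m + f m',
      forall (j : int) m, j != n -> m \in MG j -> f m = 0
    & forall a a0 m, deg0_part a a0 -> f (a *: m) = a0 * f m].

Definition Hom_to_A0_shift_zero (M : lmodType A) (MG : int -> pred M) (n : int) : Prop :=
  forall f : M -> A, hom_to_A0_shift MG n f -> forall m, f m = 0.

(* M is generated by M_i over A_0: A (x)_{A_0} M_i -> M is surjective *)
Definition generated_in_degree (M : lmodType A) (MG : int -> pred M) (i : int) : Prop :=
  forall m, exists (k : nat) (a : nat -> A) (x : nat -> M),
    (forall l, x l \in MG i) /\ m = \sum_(l < k) a l *: x l.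

Definition pre_Koszul : Prop :=
  [/\ A0_self_injective,
      forall i : nat, A0_projective (G i)
    & forall (M : lmodType A) (MG : int -> pred M) (i : int),
        graded_module MG ->
        (forall j : int, j < i -> forall m, m \in MG j -> m = 0) ->
        (forall n : int, n != i -> Hom_to_A0_shift_zero MG n) ->
        generated_in_degree MG i].

End Graded.

(* Main.v *)
Require Import Defs.
From HB Require Import structures.
From mathcomp Require Import all_boot all_order all_algebra.
From mathcomp Require Import boolp classical_sets.
Set Implicit Arguments. Unset Strict Implicit. Unset Printing Implicit Defensive.
Import Order.TTheory GRing.Theory Num.Theory.
Local Open Scope classical_set_scope.
Local Open Scope ring_scope.

Section Basics.
Variables (A : pzRingType) (G : nat -> pred A).
Hypothesis hG : pos_graded_ring G.

Lemma G0_0 : 0 \in G 0%N. Proof. by case: hG => /(_ 0%N) []. Qed.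
Lemma G0_1 : 1 \in G 0%N. Proof. by case: hG. Qed.
Lemma G0_B a b : a \in G 0%N -> b \in G 0%N -> a - b \in G 0%N.
Proof. by case: hG => /(_ 0%N) [] _ H _ _ _ _; apply: H. Qed.
Lemma G0_N a : a \in G 0%N -> - a \in G 0%N.
Proof. by move=> ha; rewrite -sub0r; apply: G0_B => //; apply: G0_0. Qed.
Lemma G0_D a b : a \in G 0%N -> b \in G 0%N -> a + b \in G 0%N.
Proof. by move=> ha hb; rewrite -(opprK b); apply: G0_B => //; apply: G0_N. Qed.
Lemma G0_M a b : a \in G 0%N -> b \in G 0%N -> a * b \in G 0%N.
Proof. by case: hG => _ H _ _ _ ha hb; have := H _ _ _ _ ha hb. Qed.

Variables (X : zmodType) (act : A -> X -> X).
Hypothesis hX : A0_module G act.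

Lemma act1 x : act 1 x = x. Proof. by case: (hX x x G0_1 G0_1). Qed.
Lemma actA r s x : r \in G 0%N -> s \in G 0%N -> act (r * s) x = act r (act s x).
Proof. by move=> hr hs; case: (hX x x hr hs). Qed.
Lemma actDl r s x : r \in G 0%N -> s \in G 0%N -> act (r + s) x = act r x + act s x.
Proof. by move=> hr hs; case: (hX x x hr hs). Qed.
Lemma actDr r x y : r \in G 0%N -> act r (x + y) = act r x + act r y.
Proof. by move=> hr; case: (hX x y hr hr). Qed.
Lemma actr0 r : r \in G 0%N -> act r 0 = 0.
Proof. move=> hr; have h := actDr 0 0 hr; rewrite addr0 in h.
by apply: (addrI (act r 0)); rewrite addr0 -h. Qed.
Lemma act0r x : act 0 x = 0.
Proof. have h := actDl x G0_0 G0_0; rewrite addr0 in h.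
by apply: (addrI (act 0 x)); rewrite addr0 -h. Qed.
Lemma actNr r x : r \in G 0%N -> act (- r) x = - act r x.
Proof. by move=> hr; apply/eqP; rewrite -(subr_eq0 _ (- act r x)) opprK -actDl ?G0_N // addNr act0r. Qed.
Lemma actBl r s x : r \in G 0%N -> s \in G 0%N -> act (r - s) x = act r x - act s x.
Proof. by move=> hr hs; rewrite actDl ?G0_N // actNr. Qed.
Lemma actNx r x : r \in G 0%N -> act r (- x) = - act r x.
Proof. by move=> hr; apply/eqP; rewrite -(subr_eq0 _ (- act r x)) opprK -actDr // addNr actr0. Qed.
Lemma actBr r x y : r \in G 0%N -> act r (x - y) = act r x - act r y.
Proof. by move=> hr; rewrite actDr // actNx. Qed.

Definition submodP (C : set X) :=
  (forall x y, C x -> C y -> C (x - y)) /\ (forall r x, r \in G 0%N -> C x -> C (act r x)).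

Lemma sub0 (C : set X) x : submodP C -> C x -> C 0.
Proof. by rewrite /submodP => -[H _] cx; rewrite -(subrr x); apply: H. Qed.
Lemma subN (C : set X) x : submodP C -> C 0 -> C x -> C (- x).
Proof. by rewrite /submodP => -[H _] c0 cx; rewrite -sub0r; apply: H. Qed.
Lemma subD (C : set X) x y : submodP C -> C 0 -> C x -> C y -> C (x + y).
Proof. move=> hC c0 cx cy; rewrite -(opprK y); have [H _] := hC; apply: H => //; exact: subN. Qed.

Hypothesis hss : A0_semisimple G.

Lemma complement (P N : set X) : submodP P -> P 0 -> submodP N -> N 0 -> N `<=` P ->
  exists C, [/\ submodP C, C 0, C `<=` P, (forall x, N x -> C x -> x = 0)
    & forall y, P y -> exists n c, [/\ N n, C c & y = n + c]].
Proof.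
move=> hP P0 hN N0 NP.
pose Pc : set (set X) := fun C => [/\ submodP C, C `<=` P & forall x, N x -> C x -> x = 0].
have [C [[hC CP CN] Cmax]] : exists A, Pc A /\ forall B, A `<` B -> ~ Pc B.
  apply: Zorn_bigcup => F FP Ftot; split.
  - split.
    + move=> x y [X1 F1 x1] [X2 F2 x2].
      case: (Ftot _ _ F1 F2) => S.
      * by exists X2 => //; case: (FP _ F2) => -[H _] _ _; apply: H => //; apply: S.
      * by exists X1 => //; case: (FP _ F1) => -[H _] _ _; apply: H => //; apply: S.
    + move=> r x hr [X1 F1 x1]; exists X1 => //.
      by case: (FP _ F1) => -[_ H] _ _; apply: H.
  - by move=> x [X1 F1 x1]; case: (FP _ F1) => _ H _; apply: H.
  - by move=> x nx [X1 F1 x1]; case: (FP _ F1) => _ _ H; apply: H.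
have C0 : C 0.
  apply: contrapT => nC0.
  apply: (Cmax (C `|` [set 0])).
    split; first by move=> x cx; left.
    by move=> H; apply: nC0; apply: (H 0); right.
  split.
  - split.
    + move=> x y [cx|->] [cy|->].
      * by left; case: hC => H _; apply: H.
      * by left; rewrite subr0.
      * by left; rewrite sub0r; apply: subN => //; apply: (sub0 hC cy).
      * by right; rewrite subrr.
    + move=> r x hr [cx|->]; first by left; case: hC => _ H; apply: H.
      by right; rewrite actr0.
  - by move=> x [cx|->] //; apply: CP.
  - by move=> x nx [cx|->] //; apply: CN.
exists C; split => // y Py.
apply: contrapT => ny.
pose I : pred A := fun r => `[< r \in G 0%N /\ exists n c, [/\ N n, C c & act r y = n + c] >].
have hI : A0_left_ideal G I.
  split.
  - by move=> a /asboolP [].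
  - split.
    + apply/asboolP; split; first exact: G0_0.
      by exists 0, 0; split => //; rewrite act0r addr0.
    + move=> a b /asboolP [ha [n1 [c1 [n1N c1C e1]]]] /asboolP [hb [n2 [c2 [n2N c2C e2]]]].
      apply/asboolP; split; first exact: G0_B.
      exists (n1 - n2), (c1 - c2); split.
      * by case: hN => H _; apply: H.
      * by case: hC => H _; apply: H.
      * by rewrite actBl // e1 e2 opprD addrACA.
  - move=> r a hr /asboolP [ha [n1 [c1 [n1N c1C e1]]]].
    apply/asboolP; split; first exact: G0_M.
    exists (act r n1), (act r c1); split.
    * by case: hN => _ H; apply: H.
    * by case: hC => _ H; apply: H.
    * by rewrite actA // e1 actDr.
have [J [hJ IJ IJsum]] := hss hI.
have [e [f [eI fJ e1]]] := IJsum 1 G0_1.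
have fG : f \in G 0%N by case: hJ => H _ _; apply: H.
have eG : e \in G 0%N by move: eI => /asboolP [].
have nfy : ~ exists n c, [/\ N n, C c & act f y = n + c].
  move=> [n [c [nN cC ef]]]; apply: ny.
  move: eI => /asboolP [_ [n1 [c1 [n1N c1C e1']]]].
  exists (n1 + n), (c1 + c); split.
  - by apply: subD.
  - by apply: subD.
  - by rewrite -{1}(act1 y) e1 actDl // e1' ef addrACA.
pose C' : set X := fun z => exists c s, [/\ C c, s \in J & z = c + act s y].
have JG s : s \in J -> s \in G 0%N by case: hJ => H _ _; apply: H.
have J0 : 0 \in J by case: hJ => _ [].
have JB a b : a \in J -> b \in J -> a - b \in J by case: hJ => _ [] _ H _; apply: H.
have JM r a : r \in G 0%N -> a \in J -> r * a \in J by case: hJ => _ _ H; apply: H.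
apply: (Cmax C').
  split.
    by move=> x cx; exists x, 0; split => //; rewrite act0r addr0.
  move=> H; apply: nfy; exists 0, (act f y); split => //.
  - by apply: H; exists 0, f; rewrite add0r.
  - by rewrite add0r.
split.
- split.
  + move=> x1 x2 [c1 [s1 [c1C s1J ->]]] [c2 [s2 [c2C s2J ->]]].
    exists (c1 - c2), (s1 - s2); split.
    * by case: hC => H _; apply: H.
    * exact: JB.
    * by rewrite actBl ?JG // opprD addrACA.
  + move=> r x hr [c1 [s1 [c1C s1J ->]]].
    exists (act r c1), (r * s1); split.
    * by case: hC => _ H; apply: H.
    * exact: JM.
    * by rewrite actDr ?actA //; apply: JG.
- move=> x [c1 [s1 [c1C s1J ->]]]; apply: subD => //; first exact: CP.
  by case: hP => _ H; apply: H => //; apply: JG.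
- move=> x nx [c1 [s1 [c1C s1J ex]]].
  have sI : s1 \in I.
    apply/asboolP; split; first exact: JG.
    exists x, (- c1); split => //; first exact: subN.
    by rewrite ex addrC addKr.
  have s0 : s1 = 0 by apply: IJ.
  move: ex; rewrite s0 act0r addr0 => ex.
  by apply: CN => //; rewrite ex.
Qed.
End Basics.
Lemma addf0 (X Y : zmodType) (f : X -> Y) : (forall a b, f (a + b) = f a + f b) -> f 0 = 0.
Proof. by move=> h; apply: (addrI (f 0)); rewrite -h !addr0. Qed.
Lemma addfB (X Y : zmodType) (f : X -> Y) : (forall a b, f (a + b) = f a + f b) ->
  forall a b, f (a - b) = f a - f b.
Proof.
move=> h a b; have fN : f (- b) = - f b.
  by apply: (addrI (f b)); rewrite -h !subrr (addf0 h).
by rewrite h fN.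
Qed.

From Stdlib Require Import ClassicalEpsilon.

Lemma inj_part (A : pzRingType) (G : nat -> pred A) : pos_graded_ring G -> A0_semisimple G ->
  A0_self_injective G.
Proof.
move=> hG hss X Y actX actY iota g hX hY [iadd iact] iinj [gG gadd gact].
pose N : set Y := fun y => exists x, y = iota x.
have hN : submodP G actY N.
  split.
  - by move=> _ _ [x1 ->] [x2 ->]; exists (x1 - x2); rewrite addfB.
  - by move=> r _ hr [x ->]; exists (actX r x); rewrite iact.
have N0 : N 0 by exists 0; rewrite (addf0 iadd).
have hT : submodP G actY setT by [].
have [C [hC C0 _ CN Cdec]] := complement hG hY hss hT (I : setT 0) hN N0 (fun _ _ => I).
pose Q y x := exists c, C c /\ y = iota x + c.
pose h y := g (epsilon (inhabits 0) (Q y)).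
have key y x c : C c -> y = iota x + c -> h y = g x.
  move=> cC ey.
  have ex : exists x, Q y x by exists x, c.
  have [c' [c'C ey']] := epsilon_spec (inhabits 0) _ ex.
  rewrite /h; congr g; apply: iinj.
  set x' := epsilon _ _ in ey' *.
  apply/eqP; rewrite -subr_eq0 -addfB //; apply/eqP.
  apply: CN; first by exists (x' - x).
  rewrite addfB //; have -> : iota x' - iota x = c - c'.
    have e : iota x' + c' = iota x + c by rewrite -ey -ey'.
    rewrite (_ : iota x' = iota x + (c - c')); first by rewrite addrC addKr.
    by rewrite addrA -e addrK.
  by case: hC => H _; apply: H.
have dec y : exists x c, C c /\ y = iota x + c.
  by have [_ [c [[x ->] cC ->]]] := Cdec y I; exists x, c.
exists h; split; last first.
  by move=> x; rewrite (key _ x 0) ?addr0.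
split.
- by move=> y; have [x [c [cC ->]]] := dec y; rewrite (key _ x c).
- move=> y1 y2; have [x1 [c1 [c1C ->]]] := dec y1; have [x2 [c2 [c2C ->]]] := dec y2.
  rewrite (key _ (x1 + x2) (c1 + c2)) ?(key (iota x1 + c1) x1 c1) ?(key (iota x2 + c2) x2 c2) ?gadd //.
    exact: (subD hC C0 c1C c2C).
  by rewrite iadd addrACA.
- move=> r y hr; have [x [c [cC ->]]] := dec y.
  rewrite (key _ (actX r x) (actY r c)) ?(key (iota x + c) x c) ?gact //.
    by case: hC => _ H; apply: H.
  by rewrite (actDr hY) // iact.
Qed.

Lemma proj_part (A : pzRingType) (G : nat -> pred A) : pos_graded_ring G -> A0_semisimple G ->
  forall i, A0_projective G (G i).
Proof.
move=> hG hss i X Y actX actY p g hX hY [padd pact] psurj [gadd gact].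
pose K : set X := fun x => p x = 0.
have hK : submodP G actX K.
  split.
  - by move=> x1 x2; rewrite /K addfB // => -> ->; rewrite subrr.
  - by move=> r x hr; rewrite /K pact // => ->; rewrite (actr0 hY).
have K0 : K 0 by rewrite /K (addf0 padd).
have hT : submodP G actX setT by [].
have [C [hC C0 _ CN Cdec]] := complement hG hX hss hT (I : setT 0) hK K0 (fun _ _ => I).
have uniqC c1 c2 : C c1 -> C c2 -> p c1 = p c2 -> c1 = c2.
  move=> h1 h2 e; apply/eqP; rewrite -subr_eq0; apply/eqP; apply: CN.
    by rewrite /K addfB // e subrr.
  by case: hC => H _; apply: H.
have exC y : exists c, C c /\ p c = y.
  have [x <-] := psurj y; have [k [c [kK cC ->]]] := Cdec x I.
  by exists c; split => //; rewrite padd kK add0r.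
pose h a := epsilon (inhabits 0) (fun c => C c /\ p c = g a).
have hP a : C (h a) /\ p (h a) = g a by apply: (epsilon_spec (inhabits 0) (fun c => C c /\ p c = g a)); apply: exC.
exists h; split; last by move=> a _; case: (hP a).
split.
- move=> a b ha hb; apply: uniqC; first by case: (hP (a + b)).
  + exact: (subD hC C0 (proj1 (hP a)) (proj1 (hP b))).
  + by rewrite padd (proj2 (hP (a + b))) (proj2 (hP a)) (proj2 (hP b)) gadd.
- move=> r a hr ha; apply: uniqC; first by case: (hP (r * a)).
  + by case: hC => _ H; apply: H => //; case: (hP a).
  + by rewrite pact // (proj2 (hP a)) (proj2 (hP (r * a))) gact.
Qed.

Section Comp.
Variables (A : pzRingType) (G : nat -> pred A) (M : lmodType A) (MG : int -> pred M).
Hypothesis hM : graded_module G MG.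

Lemma MG0 k : 0 \in MG k. Proof. by case: hM => /(_ k) [] . Qed.
Lemma MGB k a b : a \in MG k -> b \in MG k -> a - b \in MG k.
Proof. by case: hM => /(_ k) [] _ H _ _ _; apply: H. Qed.
Lemma MGN k a : a \in MG k -> - a \in MG k.
Proof. by move=> h; rewrite -sub0r; apply: MGB => //; apply: MG0. Qed.
Lemma MGD k a b : a \in MG k -> b \in MG k -> a + b \in MG k.
Proof. by move=> ha hb; rewrite -(opprK b); apply: MGB => //; apply: MGN. Qed.

Definition decomp m (s : seq int) (x : int -> M) :=
  [/\ uniq s, forall k, x k \in MG k & m = \sum_(k <- s) x k].
Definition cval j (s : seq int) (x : int -> M) := if j \in s then x j else 0.
Definition compP j m y := exists s x, decomp m s x /\ y = cval j s x.
Definition comp j m := epsilon (inhabits 0) (compP j m).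

Lemma cval_in j s x : (forall k, x k \in MG k) -> cval j s x \in MG j.
Proof. by move=> h; rewrite /cval; case: ifP => _ //; apply: MG0. Qed.

Lemma extend s u (x : int -> M) : uniq s -> uniq u -> {subset s <= u} ->
  \sum_(k <- s) x k = \sum_(k <- u) cval k s x.
Proof.
move=> us uu su; rewrite /cval; symmetry; rewrite -big_mkcond /= -big_filter.
apply: perm_big; apply: uniq_perm; [exact: (filter_uniq _ uu) | exact: us | ].
by move=> k; rewrite mem_filter; case: (boolP (k \in s)) => // /su ->.
Qed.

Lemma decomp_ex m : exists s x, decomp m s x.
Proof. by case: hM => _ _ H _; have [s [x [? ? ?]]] := H m; exists s, x. Qed.

Lemma comp_uniq m s1 x1 s2 x2 : decomp m s1 x1 -> decomp m s2 x2 ->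
  forall j, cval j s1 x1 = cval j s2 x2.
Proof.
move=> [u1 h1 e1] [u2 h2 e2] j.
pose u := undup (s1 ++ s2).
have uu : uniq u by apply: undup_uniq.
have s1u : {subset s1 <= u} by move=> k; rewrite mem_undup mem_cat => ->.
have s2u : {subset s2 <= u} by move=> k; rewrite mem_undup mem_cat => ->; rewrite orbT.
have z : \sum_(k <- u) (cval k s1 x1 - cval k s2 x2) = 0.
  by rewrite sumrB -(extend x1 u1 uu s1u) -(extend x2 u2 uu s2u) -e1 -e2 subrr.
case: hM => _ _ _ H.
case: (boolP (j \in u)) => ju.
  apply/eqP; rewrite -subr_eq0; apply/eqP.
  apply: (H u (fun k => cval k s1 x1 - cval k s2 x2) uu _ z j ju) => k; apply: MGB; apply: cval_in => k'; [exact: h1 | exact: h2].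
have n1 : j \notin s1 by apply: contra ju; apply: s1u.
have n2 : j \notin s2 by apply: contra ju; apply: s2u.
by rewrite /cval (negbTE n1) (negbTE n2).
Qed.

Lemma compE j m s x : decomp m s x -> comp j m = cval j s x.
Proof.
move=> d.
have ex : exists y, compP j m y by exists (cval j s x), s, x.
rewrite /comp; have [s' [x' [d' ->]]] := epsilon_spec (inhabits 0) _ ex.
exact: (comp_uniq d' d j).
Qed.

Lemma comp_in j m : comp j m \in MG j.
Proof. have [s [x d]] := decomp_ex m; rewrite (compE j d); apply: cval_in; by case: d. Qed.

Lemma compD j m1 m2 : comp j (m1 + m2) = comp j m1 + comp j m2.
Proof.
have [s1 [x1 d1]] := decomp_ex m1; have [s2 [x2 d2]] := decomp_ex m2.
rewrite (compE j d1) (compE j d2).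
pose u := undup (s1 ++ s2).
have uu : uniq u by apply: undup_uniq.
have s1u : {subset s1 <= u} by move=> k; rewrite mem_undup mem_cat => ->.
have s2u : {subset s2 <= u} by move=> k; rewrite mem_undup mem_cat => ->; rewrite orbT.
have d : decomp (m1 + m2) u (fun k => cval k s1 x1 + cval k s2 x2).
  case: d1 => u1 h1 e1; case: d2 => u2 h2 e2.
  split => //; first by move=> k; apply: MGD; apply: cval_in.
  by rewrite big_split /= -(extend x1 u1 uu s1u) -(extend x2 u2 uu s2u) -e1 -e2.
rewrite (compE j d) /cval.
case: (boolP (j \in u)) => // ju.
have n1 : j \notin s1 by apply: contra ju; apply: s1u.
have n2 : j \notin s2 by apply: contra ju; apply: s2u.
by rewrite (negbTE n1) (negbTE n2) addr0.
Qed.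

Lemma comp0 j : comp j 0 = 0.
Proof. by apply: (addrI (comp j 0)); rewrite -compD !addr0. Qed.

Lemma comp_hom j k m : m \in MG k -> comp j m = if j == k then m else 0.
Proof.
move=> hm.
have d : decomp m [:: k] (fun k' => if k' == k then m else 0).
  split => //; last by rewrite big_seq1 eqxx.
  by move=> k'; case: eqP => [->|_] //; apply: MG0.
by rewrite (compE j d) /cval inE; case: (j == k).
Qed.

Lemma comp_decomp m s x j : decomp m s x -> j \in s -> comp j m = x j.
Proof. by move=> d js; rewrite (compE j d) /cval js. Qed.

Lemma MGZ (k : nat) j a m : a \in G k -> m \in MG j -> a *: m \in MG (k%:Z + j).
Proof. by case: hM => _ H _ _; apply: H. Qed.
Lemma MGZ0 j a m : a \in G 0%N -> m \in MG j -> a *: m \in MG j.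
Proof. by move=> ha hm; have := MGZ ha hm; rewrite add0r. Qed.

Lemma compZ0 j r m : r \in G 0%N -> comp j (r *: m) = r *: comp j m.
Proof.
move=> hr; have [s [x d]] := decomp_ex m.
have d' : decomp (r *: m) s (fun k => r *: x k).
  case: d => us h e; split => //; first by move=> k; apply: MGZ0.
  by rewrite e scaler_sumr.
rewrite (compE j d) (compE j d') /cval; case: ifP => //; by rewrite scaler0.
Qed.

End Comp.

From mathcomp Require Import zify.

Lemma zmod_swap (V : zmodType) (a b c d : V) : a + c = b + d -> a - b = d - c.
Proof. by move=> e; rewrite -(addrK c a) e (addrC b d) addrAC addrK. Qed.

Section Main.
Variables (A : pzRingType) (G : nat -> pred A).
Hypotheses (hG : pos_graded_ring G) (hss : A0_semisimple G).
Variables (M : lmodType A) (MG : int -> pred M) (i : int).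
Hypotheses (hM : graded_module G MG)
  (hlow : forall j : int, j < i -> forall m, m \in MG j -> m = 0)
  (hhom : forall n : int, n != i -> Hom_to_A0_shift_zero G MG n).

Let act := fun (r : A) (m : M) => r *: m.
Lemma hMod : A0_module G act.
Proof. by move=> r s x y _ _; split; rewrite /act ?scale1r ?scalerA ?scalerDl ?scalerDr. Qed.

Definition Ngen (m : M) := exists l : seq (A * M),
  (forall p, p \in l -> p.2 \in MG i) /\ m = \sum_(p <- l) p.1 *: p.2.

Lemma Ngen0 : Ngen 0. Proof. by exists [::]; rewrite big_nil. Qed.
Lemma NgenD m1 m2 : Ngen m1 -> Ngen m2 -> Ngen (m1 + m2).
Proof.
move=> [l1 [h1 ->]] [l2 [h2 ->]]; exists (l1 ++ l2); split; last by rewrite big_cat.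
by move=> p; rewrite mem_cat => /orP [/h1|/h2].
Qed.
Lemma NgenZ a m : Ngen m -> Ngen (a *: m).
Proof.
move=> [l [h ->]]; exists [seq (a * p.1, p.2) | p <- l]; split.
  by move=> p /mapP [q ql ->] /=; apply: h.
by rewrite big_map scaler_sumr; apply: eq_bigr => p _; rewrite scalerA.
Qed.
Lemma NgenB m1 m2 : Ngen m1 -> Ngen m2 -> Ngen (m1 - m2).
Proof. by move=> h1 h2; apply: NgenD => //; rewrite -scaleN1r; apply: NgenZ. Qed.
Lemma Ngen_i m : m \in MG i -> Ngen m.
Proof.
move=> hm; exists [:: (1, m)]; split; last by rewrite big_seq1 scale1r.
by move=> p; rewrite inE => /eqP -> /=.
Qed.

Lemma Ngen_all : forall m, Ngen m.
Proof.
move=> m0; apply: contrapT => nm0.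
pose Dset k := exists y, y \in MG k /\ ~ Ngen y.
have Dgt k : Dset k -> i < k.
  move=> [y [hy ny]]; case: (ltgtP k i) => // hk.
    by case: ny; rewrite (hlow hk hy); apply: Ngen0.
  by case: ny; apply: Ngen_i; rewrite -hk.
have [k Dk] : exists k, Dset k.
  apply: contrapT => H; apply: nm0.
  have [s [x [us xin ->]]] := decomp_ex hM m0.
  apply: (big_ind Ngen) => //; [exact: Ngen0 | exact: NgenD |].
  move=> k _; apply: contrapT => nk; apply: H; exists k, (x k); split => //.
have exP : exists n : nat, `[< Dset (i + n%:Z) >].
  exists `|k - i|%N; apply/asboolP.
  by rewrite gez0_abs ?subr_ge0 ?(ltW (Dgt _ Dk)) // addrCA subrr addr0.
case: (ex_minnP exP) => n /asboolP Dj nmin.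
pose j := i + n%:Z.
have ji : j != i.
  by apply/eqP => e; have := Dgt _ Dj; rewrite -/j e ltxx.
have lowN k' y : k' < j -> y \in MG k' -> Ngen y.
  move=> kj hy; case: (ltgtP k' i) => hk.
  - by rewrite (hlow hk hy); apply: Ngen0.
  - apply: contrapT => ny.
    have : (n <= `|k' - i|)%N by apply: nmin; apply/asboolP; rewrite gez0_abs ?subr_ge0 ?(ltW hk) // addrCA subrr addr0; exists y.
    move: kj hk; rewrite /j; lia.
  - by apply: Ngen_i; rewrite -hk.
pose P : set M := fun y => y \in MG j.
pose Q : set M := fun y => y \in MG j /\ Ngen y.
have hP : submodP G act P.
  split; [by move=> a b; apply: (MGB hM) | by move=> r a hr ha; apply: (MGZ0 hM)].
have P0 : P 0 by apply: (MG0 hM).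
have hQ : submodP G act Q.
  split.
  - by move=> a b [ha na] [hb nb]; split; [apply: (MGB hM) | apply: NgenB].
  - by move=> r a hr [ha na]; split; [apply: (MGZ0 hM) | apply: NgenZ].
have Q0 : Q 0 by split; [apply: (MG0 hM) | apply: Ngen0].
have QP : Q `<=` P by move=> y [].
have [C [hC C0 CP CQ Cdec]] := complement hG hMod hss hP P0 hQ Q0 QP.
have [y0 [hy0 ny0]] := Dj.
have [q0 [x [q0Q xC ey0]]] := Cdec y0 hy0.
have x0 : x != 0.
  by apply/eqP => e; apply: ny0; rewrite ey0 e addr0; case: q0Q.
have xP : x \in MG j := CP _ xC.
pose ann : pred A := fun r => (r \in G 0%N) && (r *: x == 0).
have hann : A0_left_ideal G ann.
  split.
  - by move=> a; rewrite unfold_in => /andP [].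
  - split; first by rewrite unfold_in; apply/andP; split; [exact: (G0_0 hG) | rewrite scale0r].
    move=> a b; rewrite !unfold_in => /andP [ha /eqP xa] /andP [hb /eqP xb].
    by apply/andP; split; [exact: (G0_B hG) | rewrite scalerBl xa xb subrr].
  - move=> r a hr; rewrite !unfold_in => /andP [ha /eqP xa].
    by apply/andP; split; [exact: (G0_M hG) | rewrite -scalerA xa scaler0].
have [J [hJ annJ annJsum]] := hss hann.
have [e [f [eann fJ e1]]] := annJsum 1 (G0_1 hG).
have JG s : s \in J -> s \in G 0%N by case: hJ => H _ _; apply: H.
have JM r a : r \in G 0%N -> a \in J -> r * a \in J by case: hJ => _ _ H; apply: H.
have fG := JG _ fJ.
have fx : f *: x = x.
  move: eann; rewrite unfold_in => /andP [_ /eqP ex].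
  by rewrite -{2}(scale1r x) e1 scalerDl ex add0r.
have f0 : f != 0 by apply: contraNneq x0 => f0; rewrite -fx f0 scale0r.
pose QD : set M := fun z => exists q r, [/\ Q q, r \in G 0%N & z = q + r *: x].
have hQD : submodP G act QD.
  split.
  - move=> _ _ [q1 [r1 [q1Q r1G ->]]] [q2 [r2 [q2Q r2G ->]]].
    exists (q1 - q2), (r1 - r2); split.
    + by case: hQ => H _; apply: H.
    + exact: (G0_B hG).
    + by rewrite scalerBl opprD addrACA.
  - move=> r _ hr [q1 [r1 [q1Q r1G ->]]].
    exists (r *: q1), (r * r1); split.
    + by case: hQ => _ H; apply: H.
    + exact: (G0_M hG).
    + by rewrite /act scalerDr scalerA.
have QD0 : QD 0 by exists 0, 0; split => //; [exact: (G0_0 hG) | rewrite scale0r addr0].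
have QDP : QD `<=` P.
  move=> _ [q [r [[qP _] rG ->]]]; apply: (MGD hM) => //; exact: (MGZ0 hM).
have [C2 [hC2 C20 C2P QDC2 C2dec]] := complement hG hMod hss hP P0 hQD QD0 QDP.
have Qx r : r \in G 0%N -> Q (r *: x) -> r *: x = 0.
  move=> hr qr; apply: CQ => //; by case: hC => _ H; apply: H.
pose R y t := t \in G 0%N /\ exists q c, [/\ Q q, C2 c & y = q + t *: x + c].
pose F y := epsilon (inhabits 0) (R y) * f.
have keyF y q r c : Q q -> C2 c -> r \in G 0%N -> y = q + r *: x + c -> F y = r * f.
  move=> qQ cC hr ey.
  have ex : exists t, R y t by exists r; split => //; exists q, c.
  have [ht [q' [c' [q'Q c'C ey']]]] := epsilon_spec (inhabits 0) _ ex.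
  rewrite /F; set t := epsilon _ _ in ht ey' *.
  have h1 : (q + r *: x) - (q' + t *: x) = c' - c.
    by apply: zmod_swap; rewrite -ey -ey'.
  have h2 : (q + r *: x) - (q' + t *: x) = 0.
    rewrite h1; apply: QDC2; last by case: hC2 => H _; apply: H.
    by rewrite -h1; case: hQD => H _; apply: H; [exists q, r | exists q', t].
  have h3 : r *: x - t *: x = q' - q.
    apply: zmod_swap; rewrite addrC [t *: x + _]addrC; apply/eqP; rewrite -subr_eq0; exact/eqP.
  have h4 : (r - t) *: x = 0.
    apply: Qx; first exact: (G0_B hG).
    rewrite scalerBl h3; by case: hQ => H _; apply: H.
  have h5 : (r - t) * f = 0.
    apply: annJ; last by apply: JM => //; apply: (G0_B hG).
    rewrite unfold_in; apply/andP; split; first by apply: (G0_M hG) => //; apply: (G0_B hG).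
    by rewrite -scalerA fx h4.
  by apply/esym/eqP; rewrite -subr_eq0 -mulrBl h5.
have decF y : P y -> exists q r c, [/\ Q q, C2 c, r \in G 0%N & y = q + r *: x + c].
  move=> hy; have [_ [c [[q [r [qQ hr ->]]] cC ->]]] := C2dec y hy.
  by exists q, r, c.
have FG y : P y -> F y \in G 0%N.
  by move=> /decF [q [r [c [qQ cC hr ->]]]]; rewrite (keyF _ q r c) // (G0_M hG).
have FD y1 y2 : P y1 -> P y2 -> F (y1 + y2) = F y1 + F y2.
  move=> /decF [q1 [r1 [c1 [q1Q c1C hr1 ->]]]] /decF [q2 [r2 [c2 [q2Q c2C hr2 ->]]]].
  rewrite (keyF _ (q1 + q2) (r1 + r2) (c1 + c2)).
  - by rewrite (keyF (q1 + r1 *: x + c1) q1 r1 c1) // (keyF (q2 + r2 *: x + c2) q2 r2 c2) // mulrDl.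
  - exact: (subD hQ Q0).
  - exact: (subD hC2 C20).
  - exact: (G0_D hG).
  - by rewrite addrACA [X in X + _ = _]addrACA scalerDl.
have FZ r y : r \in G 0%N -> P y -> F (r *: y) = r * F y.
  move=> hr /decF [q [t [c [qQ cC ht ->]]]].
  rewrite (keyF _ (r *: q) (r * t) (r *: c)).
  - by rewrite (keyF (q + t *: x + c) q t c) // mulrA.
  - by case: hQ => _ H; apply: H.
  - by case: hC2 => _ H; apply: H.
  - exact: (G0_M hG).
  - by rewrite !scalerDr scalerA.
have FQ q : Q q -> F q = 0.
  by move=> qQ; rewrite (keyF q q 0 0) ?mul0r ?(G0_0 hG) // scale0r !addr0.
have F0 : F 0 = 0 by apply: FQ.
have Fx : F x = f.
  by rewrite (keyF x 0 1 0) ?mul1r ?(G0_1 hG) // scale1r add0r addr0.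
pose fm m := F (comp MG j m).
have fmD m m' : fm (m + m') = fm m + fm m'.
  by rewrite /fm (compD hM) FD //; apply: (comp_in hM).
have fmS z : (fun z => fm z = 0) z -> True by [].
have hf : hom_to_A0_shift G MG j fm.
  split.
  - by move=> m; apply: FG; apply: (comp_in hM).
  - exact: fmD.
  - by move=> k0 m kj hm; rewrite /fm (comp_hom hM j hm) eq_sym (negbTE kj) F0.
  - move=> a a0 m [a0G [nn [xs [xsG ea]]]].
    have -> : a = a0 + \sum_(l < nn) xs l by rewrite -ea addrC subrK.
    rewrite scalerDl fmD /fm (compZ0 hM) // FZ //; last exact: (comp_in hM).
    suff -> : F (comp MG j ((\sum_(l < nn) xs l) *: m)) = 0 by rewrite addr0.
    rewrite scaler_suml.
    apply: (big_ind (fun z => F (comp MG j z) = 0)).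
    + by rewrite (comp0 hM) F0.
    + by move=> z1 z2 h1 h2; rewrite (compD hM) FD ?h1 ?h2 ?addr0 //; apply: (comp_in hM).
    move=> l _.
    have [s [xm [us xmin em]]] := decomp_ex hM m.
    rewrite em scaler_sumr.
    apply: (big_ind (fun z => F (comp MG j z) = 0)).
    + by rewrite (comp0 hM) F0.
    + by move=> z1 z2 h1 h2; rewrite (compD hM) FD ?h1 ?h2 ?addr0 //; apply: (comp_in hM).
    move=> k1 _; have hz := MGZ hM (xsG l) (xmin k1).
    case: (eqVneq j (l.+1%:Z + k1)) => ejk.
    + have kj : k1 < j by rewrite ejk; lia.
      have nz : Ngen (xs l *: xm k1) by apply: NgenZ; apply: (lowN _ _ kj (xmin k1)).
      rewrite -ejk in hz; rewrite (comp_hom hM j hz) eqxx; apply: FQ; by split.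
    + by rewrite (comp_hom hM j hz) (negbTE ejk) F0.
have := hhom ji hf x.
rewrite /fm (comp_hom hM j xP) eqxx Fx => f0'.
by move: f0; rewrite f0' eqxx.
Qed.
End Main.

Theorem mainTheorem7 (A : pzRingType) (G : nat -> pred A) :
  pos_graded_ring G -> A0_semisimple G -> pre_Koszul G.
Proof.
move=> hG hss; split.
- exact: inj_part.
- exact: proj_part.
- move=> M MG i hM hlow hhom m.
  have [l [hl e]] := Ngen_all hG hss hM hlow hhom m.
  exists (size l), (fun n => (nth (0, 0) l n).1), (fun n => (nth (0, 0) l n).2); split.
  + move=> n; case: (ltnP n (size l)) => hn.
      by apply: hl; apply: mem_nth.
    by rewrite nth_default //; apply: (MG0 hM).
  + by rewrite e (big_nth (0, 0)) big_mkord.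
Qed.
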